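(* Fix a time step $t$. Let $G$ be a class of real-valued functions on the representation space $\mathcal{R}$, let $\Phi$ be an invertible representation function, let the loss be the squared error $L(y,y')=(y-y')^2$, and suppose there is a constant $B_\Phi>0$ such that, for $\omega\in\{0,1\}$, the function $\mathbf{r}\mapsto \ell_{f,\Phi}(\Phi^{-1}(\mathbf{r}),\omega)/B_\Phi$ belongs to $G$. Then $$\epsilon_{PEHE_{t,g}}\le 2\big(R^{1}_{t,g}(f,\Phi)+R^{0}_{t,g}(f,\Phi)\big)+B_\Phi\,\mathrm{IPM}_G\big(g_\Phi(\cdot\mid W_t=1),g_\Phi(\cdot\mid W_t=0)\big)+C,$$ where $C$ is a constant independent of $f$ and $\Phi$. Moreover, if strict overlap holds, i.e. there is $\delta\in(0,1/2)$ with $\delta<e(\mathbf{h}_t)<1-\delta$ for all $\mathbf{h}_t$, then there exist constants $0<A_{t,g}\le B_{t,g}$ such that $$A_{t,g}\,\epsilon_{PEHE_{t,g}}\le \epsilon_{PEHE_t}\le B_{t,g}\,\epsilon_{PEHE_{t,g}}.$$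
   Context: Setting: time steps $t$, binary treatment $W_t\in\{0,1\}$, outcome $Y_t$, potential outcomes $Y_t(\omega)$, history $\mathbf{H}_t=[\mathbf{X}_{\le t},W_{<t},Y_{<t}]$, and a latent variable $\mathbf{Z}$ with inference distribution $q_\phi(\mathbf{Z}\mid\mathcal{D}_T)$. Propensity score $e(\mathbf{h}_t)=p(W_t=1\mid\mathbf{H}_t=\mathbf{h}_t)$. $\Phi:\mathcal{H}_t\to\mathcal{R}\subset\mathbb{R}^r$ is an invertible representation function; $f(\Phi(\mathbf{h}_t),\mathbf{z},\omega)$ is a hypothesis for the outcome. Pointwise risk: $\ell_{f,\Phi}(\mathbf{h}_t,\omega)=\mathbb{E}_{\mathbf{Z}\sim q_\phi}\mathbb{E}\big[L(Y_t(\omega),f(\Phi(\mathbf{h}_t),\mathbf{Z},\omega))\mid \mathbf{H}_t=\mathbf{h}_t,\mathbf{Z}\big]$. Weights: $\alpha(\mathbf{h}_t,\omega)\propto \dfrac{a(\mathbf{h}_t)}{\omega e(\mathbf{h}_t)+(1-\omega)(1-e(\mathbf{h}_t))}$ for a nonnegative tilting function $a$ (e.g. $a\equiv1$, $a=\min(e,1-e)$, $a=e(1-e)$), normalized so that $\int\alpha(\mathbf{h}_t,\omega)p(\mathbf{h}_t\mid W_t=\omega)\,d\mathbf{h}_t=1$. Target distributions: $g(\mathbf{h}_t\mid W_t=\omega)=\alpha(\mathbf{h}_t,\omega)p(\mathbf{h}_t\mid W_t=\omega)$ (both equal to $g(\mathbf{h}_t)\propto a(\mathbf{h}_t)p(\mathbf{h}_t)$);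 $g_\Phi(\cdot\mid W_t=\omega)$ is the distribution of $\Phi(\mathbf{H}_t)$ when $\mathbf{H}_t\sim g(\cdot\mid W_t=\omega)$. Weighted factual risk: $R^{\omega}_{t,g}(f,\Phi)=\mathbb{E}_{\mathbf{H}_t\mid W_t=\omega}\big[\alpha(\mathbf{H}_t,\omega)\ell_{f,\Phi}(\mathbf{H}_t,\omega)\big]$. Treatment effects: $\tau(\mathbf{h}_t,\mathbf{z})=\mathbb{E}(Y_t(1)-Y_t(0)\mid\mathbf{H}_t=\mathbf{h}_t,\mathbf{Z}=\mathbf{z})$ and $\hat\tau_{f,\Phi}(\mathbf{h}_t,\mathbf{z})=f(\Phi(\mathbf{h}_t),\mathbf{z},1)-f(\Phi(\mathbf{h}_t),\mathbf{z},0)$. PEHE: $\epsilon_{PEHE_t}=\mathbb{E}_{\mathbf{Z}\sim q_\phi}\mathbb{E}_{\mathbf{H}_t}[(\tau(\mathbf{H}_t,\mathbf{Z})-\hat\tau_{f,\Phi}(\mathbf{H}_t,\mathbf{Z}))^2]$; weighted PEHE $\epsilon_{PEHE_{t,g}}$ is the same with $\mathbf{H}_t\sim g$. Integral probability metric: $\mathrm{IPM}_G(P,Q)=\sup_{h\in G}\left|\int h\,dP-\int h\,dQ\right|$. *)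

(* Defs.v *)
From HB Require Import structures.
From mathcomp Require Import all_boot all_order all_algebra.
From mathcomp Require Import all_classical all_reals all_analysis.
Set Implicit Arguments. Unset Strict Implicit. Unset Printing Implicit Defensive.
Import Order.TTheory GRing.Theory Num.Theory.
Import numFieldNormedType.Exports.
Local Open Scope classical_set_scope.
Local Open Scope ring_scope.
Local Open Scope ereal_scope.

(* Setting (time step t fixed):
   - Ht  : space of histories h_t, with p : probability Ht R the law of H_t;
   - e   : propensity score e(h_t) = P(W_t = 1 | H_t = h_t);
   - Zt  : latent space, q : probability Zt R the inference distribution
           q_phi(Z | D_T) (the data D_T being fixed);
   - KY w : conditional law of the potential outcome Y_t(w) given
           H_t = h_t, Z = z (a probability kernel);
   - Rep : representation space, Phi : Ht -> Rep the representation;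
   - f   : Rep -> Zt -> bool -> R the outcome hypothesis (w = true is 1). *)
Section defs.
Context {R : realType} {dH dZ dR : measure_display}
  {Ht : measurableType dH} {Zt : measurableType dZ} {Rep : measurableType dR}.

(* w e(h) + (1-w)(1-e(h)) = P(W_t = w | H_t = h) *)
Definition prop_w (e : Ht -> R) (w : bool) (h : Ht) : R :=
  if w then e h else (1 - e h)%R.

Definition probW (p : probability Ht R) (e : Ht -> R) (w : bool) : R :=
  fine (\int[p]_h (prop_w e w h)%:E).

(* E[F(H_t) | W_t = w] = \int F(h) p(h | W_t = w) dh, where
   p(h | W_t = w) = P(W_t = w | H_t = h) p(h) / P(W_t = w) (Bayes). *)
Definition condE (p : probability Ht R) (e : Ht -> R) (w : bool)
    (F : Ht -> \bar R) : \bar R :=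
  \int[p]_h (F h * (prop_w e w h / probW p e w)%:E).

(* alpha(h,w) = a(h) / (w e(h) + (1-w)(1-e(h))), normalized so that
   \int alpha(h,w) p(h | W_t = w) dh = 1 *)
Definition alpha (p : probability Ht R) (e a : Ht -> R) (w : bool) (h : Ht) : R :=
  ((a h / prop_w e w h) /
    fine (condE p e w (fun x => (a x / prop_w e w x)%:E)))%R.

Definition ell (q : probability Zt R) (KY : bool -> R.-pker (Ht * Zt)%type ~> R)
    (f : Rep -> Zt -> bool -> R) (Phi : Ht -> Rep) (h : Ht) (w : bool) : \bar R :=
  \int[q]_z \int[KY w (h, z)]_y ((y - f (Phi h) z w) ^+ 2)%:E.

Definition wrisk (p : probability Ht R) (e a : Ht -> R) (q : probability Zt R)
    (KY : bool -> R.-pker (Ht * Zt)%type ~> R)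
    (f : Rep -> Zt -> bool -> R) (Phi : Ht -> Rep) (w : bool) : \bar R :=
  condE p e w (fun h => (alpha p e a w h)%:E * ell q KY f Phi h w).

Definition tau (KY : bool -> R.-pker (Ht * Zt)%type ~> R) (h : Ht) (z : Zt) : R :=
  (fine (\int[KY true (h, z)]_y y%:E) - fine (\int[KY false (h, z)]_y y%:E))%R.

Definition tauhat (f : Rep -> Zt -> bool -> R) (Phi : Ht -> Rep) (h : Ht) (z : Zt) : R :=
  (f (Phi h) z true - f (Phi h) z false)%R.

Definition pehe (p : probability Ht R) (q : probability Zt R)
    (KY : bool -> R.-pker (Ht * Zt)%type ~> R)
    (f : Rep -> Zt -> bool -> R) (Phi : Ht -> Rep) : \bar R :=
  \int[q]_z \int[p]_h ((tau KY h z - tauhat f Phi h z) ^+ 2)%:E.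

(* E_{H ~ g}[F(H)] with g(h) = a(h) p(h) / \int a dp *)
Definition gE (p : probability Ht R) (a : Ht -> R) (F : Ht -> \bar R) : \bar R :=
  \int[p]_h (F h * (a h / fine (\int[p]_x (a x)%:E))%:E).

Definition pehe_g (p : probability Ht R) (a : Ht -> R) (q : probability Zt R)
    (KY : bool -> R.-pker (Ht * Zt)%type ~> R)
    (f : Rep -> Zt -> bool -> R) (Phi : Ht -> Rep) : \bar R :=
  \int[q]_z gE p a (fun h => ((tau KY h z - tauhat f Phi h z) ^+ 2)%:E).

(* \int u d g_Phi(. | W_t = w), where g_Phi(. | W_t = w) is the law of
   Phi(H_t) for H_t ~ g(. | W_t = w) = alpha(., w) p(. | W_t = w)
   (change of variables for the pushforward by Phi). *)
Definition gPhiE (p : probability Ht R) (e a : Ht -> R) (Phi : Ht -> Rep)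
    (w : bool) (u : Rep -> R) : \bar R :=
  condE p e w (fun h => (alpha p e a w h * u (Phi h))%:E).

(* IPM_G(P,Q) = sup_{u in G} | \int u dP - \int u dQ |, with P, Q given
   through their integration functionals EP u = \int u dP, EQ u = \int u dQ *)
Definition IPM (G : set (Rep -> R)) (EP EQ : (Rep -> R) -> \bar R) : \bar R :=
  ereal_sup [set `|EP u - EQ u| | u in G].

End defs.

(* Main.v *)
Require Import Defs.
From HB Require Import structures.
From mathcomp Require Import all_boot all_order all_algebra.
From mathcomp Require Import all_classical all_reals all_analysis.
From mathcomp Require Import measurable_realfun.
From mathcomp Require Import ring lra.
Import Order.TTheory GRing.Theory Num.Theory.
Import numFieldNormedType.Exports.
Local Open Scope classical_set_scope.
Local Open Scope ring_scope.
Local Open Scope ereal_scope.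



Lemma integrable_cst1 (R : realType) d (T : measurableType d)
  (mu : {measure set T -> \bar R}) (k : R) : mu setT = 1 ->
  mu.-integrable setT (fun _ => k%:E).
Proof.
move=> mu1; apply/integrableP; split; first exact: measurable_cst.
by rewrite integral_cst// mu1 mule1 ltry.
Qed.

Lemma jensen_sq (R : realType) (mu : {measure set R -> \bar R}) (c : R) :
  mu setT = 1 -> mu.-integrable setT EFin ->
  ((fine (\int[mu]_y y%:E) - c) ^+ 2)%:E <= \int[mu]_y ((y - c) ^+ 2)%:E.
Proof.
move=> mu1 iy.
set m := fine (\int[mu]_y y%:E).
have Im : \int[mu]_y y%:E = m%:E by rewrite fineK//; exact: integrable_fin_num.
have mg : measurable_fun [set: R] (EFin \o (fun y : R => (y - c) ^+ 2)%R).
  apply/measurable_EFinP; apply: measurable_funX.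
  exact: measurable_funB.
have [->|finf] := eqVneq (\int[mu]_y ((y - c) ^+ 2)%:E) +oo; first exact: leey.
have ig : mu.-integrable setT (fun y : R => ((y - c) ^+ 2)%:E).
  apply/integrableP; split => //.
  under eq_integral do rewrite gee0_abs ?lee_fin ?sqr_ge0//.
  by rewrite ltey.
pose K0 := ((m - c) ^+ 2 - 2 * (m - c) * m)%R.
pose K1 := (2 * (m - c))%R.
have il : mu.-integrable setT (fun y : R => (K0 + K1 * y)%:E).
  have i1 := @integrable_cst1 _ _ _ mu K0 mu1.
  have i2 := integrableZl measurableT K1 iy.
  have i3 := integrableD measurableT i1 i2.
  apply: eq_integrable i3; first exact: measurableT.
  by move=> y _ /=; rewrite EFinD EFinM.

have -> : ((m - c) ^+ 2)%:E = \int[mu]_y (K0 + K1 * y)%:E.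
  rewrite (eq_integral (fun y => (fun _ => K0%:E) y + (fun y => K1%:E * y%:E) y)); last first.
    by move=> y _; rewrite EFinD EFinM.
  rewrite integralD//; last 2 first.
    exact: integrable_cst1.
    exact: integrableZl.
  rewrite integral_cst// mu1 mule1 integralZl// Im -EFinM -EFinD; congr EFin.
  rewrite /K0 /K1; ring.
apply: le_integral => // y _; rewrite lee_fin /K0 /K1.
rewrite -subr_ge0 (_ : (_ - _ = (y - m) ^+ 2)%R) ?sqr_ge0 //; ring.
Qed.



Section meas.
Context (R : realType) (dH dZ dR : measure_display)
  (Ht : measurableType dH) (Zt : measurableType dZ) (Rep : measurableType dR)
  (KY : bool -> R.-pker (Ht * Zt)%type ~> R)
  (Phi : Ht -> Rep) (f : Rep -> Zt -> bool -> R)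
  (mPhi : measurable_fun setT Phi)
  (mf : forall w, measurable_fun setT (fun rz : Rep * Zt => f rz.1 rz.2 w)).

Lemma mfhat w : measurable_fun [set: Ht * Zt] (fun hz : Ht * Zt => f (Phi hz.1) hz.2 w).
Proof.
have hp : measurable_fun [set: Ht * Zt] (fun hz : Ht * Zt => (Phi hz.1, hz.2)).
  apply: measurable_fun_pair; last exact: measurable_snd.
  exact: measurableT_comp mPhi measurable_fst.
exact: (measurableT_comp (mf w) hp).
Qed.

Lemma mSq w : measurable_fun [set: Ht * Zt]
  (fun hz => \int[KY w hz]_y ((y - f (Phi hz.1) hz.2 w) ^+ 2)%:E).
Proof.
apply: (measurable_fun_integral_finite_kernel
   (fun xy : (Ht * Zt) * R => ((xy.2 - f (Phi xy.1.1) xy.1.2 w) ^+ 2)%:E) (KY w)).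
  by move=> xy; rewrite lee_fin sqr_ge0.
apply/measurable_EFinP; apply: measurable_funX; apply: measurable_funB.
  exact: measurable_snd.
exact: measurableT_comp (mfhat w) measurable_fst.
Qed.

Lemma mmean w : measurable_fun [set: Ht * Zt]
  (fun hz => fine (\int[KY w hz]_y y%:E)).
Proof.
apply: measurableT_comp => //.
rewrite (_ : (fun hz => _) = (fun hz => \int[KY w hz]_y (@EFin R)^\+ y - \int[KY w hz]_y (@EFin R)^\- y)); last first.
  by apply/funext => hz; rewrite integralE.
apply: emeasurable_funB.
  apply: (measurable_fun_integral_kernel (measurable_kernel (KY w))).
  - by move=> y; exact: funepos_ge0.
  - exact: measurable_funepos.
apply: (measurable_fun_integral_kernel (measurable_kernel (KY w))).
- by move=> y; exact: funeneg_ge0.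
- exact: measurable_funeneg.
Qed.

Lemma mX : measurable_fun [set: Ht * Zt]
  (fun hz => ((tau KY hz.1 hz.2 - tauhat f Phi hz.1 hz.2) ^+ 2)%:E).
Proof.
apply/measurable_EFinP; apply: measurable_funX; apply: measurable_funB.
  rewrite /tau; apply: measurable_funB.
    by have := mmean true; apply: eq_measurable_fun => -[h z].
  by have := mmean false; apply: eq_measurable_fun => -[h z].
rewrite /tauhat; apply: measurable_funB; exact: mfhat.
Qed.

End meas.



Section main.
Context (R : realType) (dH dZ dR : measure_display)
  (Ht : measurableType dH) (Zt : measurableType dZ) (Rep : measurableType dR)
  (p : probability Ht R) (q : probability Zt R)
  (KY : bool -> R.-pker (Ht * Zt)%type ~> R)
  (e a : Ht -> R)
  (me : measurable_fun setT e)
  (e01 : forall h, (0 < e h < 1)%R)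
  (ma : measurable_fun setT a)
  (a0 : forall h, (0 <= a h)%R)
  (ia : p.-integrable setT (EFin \o a))
  (apos : 0 < \int[p]_h (a h)%:E).

Lemma pT : p setT = 1.
Proof. exact: probability_setT. Qed.

Lemma prop_gt0 w h : (0 < prop_w e w h)%R.
Proof. by case: w; rewrite /prop_w; have := e01 h; case/andP => h1 h2 //; rewrite subr_gt0. Qed.

Lemma prop_le1 w h : (prop_w e w h <= 1)%R.
Proof.
case: w; rewrite /prop_w; have := e01 h; case/andP => h1 h2.
  exact: ltW.
by rewrite lerBlDr lerDl ltW.
Qed.

Lemma mprop w : measurable_fun setT (prop_w e w).
Proof.
case: w; rewrite /prop_w /=; first exact: me.
by apply: measurable_funB => //.
Qed.

Lemma probW_gt0 w : (0 < probW p e w)%R.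
Proof.
rewrite /probW; apply: fine_gt0; apply/andP; split.
  rewrite lt0e; apply/andP; split; last first.
    by apply: integral_ge0 => h _; rewrite lee_fin ltW// prop_gt0.
  apply/eqP => I0.
  have mP : measurable_fun setT (EFin \o prop_w e w) by apply/measurable_EFinP; exact: mprop.
  have := (ae_eq_integral_abs p measurableT mP).1.
  rewrite (eq_integral (fun h => (prop_w e w h)%:E)); last first.
    by move=> h _; rewrite gee0_abs// lee_fin ltW// prop_gt0.
  move=> /(_ I0) [N [mN pN0 sub]].
  have NT : N = setT.
    apply/seteqP; split => // x _; apply: sub => /= /(_ I) /eqP.
    by rewrite eqe gt_eqF// prop_gt0.
  have h1 := pT.
  rewrite -NT pN0 in h1.
  by move: h1 => [] /esym/eqP; rewrite oner_eq0.
have H : \int[p]_h (prop_w e w h)%:E <= \int[p]_h (cst (1%R)%:E h).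
  apply: (ge0_le_integral p measurableT).
  - by move=> h _; rewrite lee_fin ltW// prop_gt0.
  - by apply/measurable_EFinP; exact: mprop.
  - exact: measurable_cst.
  - by move=> h _; rewrite /= lee_fin prop_le1.
apply: (le_lt_trans H).
rewrite integral_cst// mul1e; apply: le_lt_trans (probability_le1 p measurableT) _; exact: ltry.
Qed.

Definition NN := fine (\int[p]_x (a x)%:E).

Lemma intaE : \int[p]_x (a x)%:E = NN%:E.
Proof. by rewrite /NN fineK//; exact: (integrable_fin_num measurableT ia). Qed.

Lemma NN_gt0 : (0 < NN)%R.
Proof. by rewrite -lte_fin -intaE. Qed.

Lemma condE_norm w :
  condE p e w (fun x => (a x / prop_w e w x)%:E) = (NN / probW p e w)%:E.
Proof.
rewrite /condE.
have pW := probW_gt0 w.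
rewrite (eq_integral (fun h => (EFin \o a) h * ((probW p e w)^-1)%:E)); last first.
  move=> h _ /=; rewrite -EFinM; congr EFin.
  have := prop_gt0 w h => ph.
  field; apply/andP; split; exact: lt0r_neq0.
by rewrite integralZr// intaE.
Qed.

Lemma wriskE (f : Rep -> Zt -> bool -> R) (Phi : Ht -> Rep) w : wrisk p e a q KY f Phi w =
  \int[p]_h (ell q KY f Phi h w * (a h / NN)%:E).
Proof.
rewrite /wrisk /condE; apply: eq_integral => h _.
rewrite /alpha condE_norm /=.
rewrite (muleC _ (ell _ _ _ _ _ _)) -muleA -EFinM; congr (_ * _%:E).
have := prop_gt0 w h => ph; have := probW_gt0 w => pW; have := NN_gt0 => nn.
field; apply/and3P; split; exact: lt0r_neq0.
Qed.

Lemma int_cstp (r : R) : \int[p]_x (cst r%:E x) = r%:E.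
Proof.
rewrite integral_cst//; transitivity (r%:E * 1); last by rewrite mule1.
congr (_ * _); exact: probability_setT.
Qed.

End main.



Section part1.
Context (R : realType) (dH dZ dR : measure_display)
  (Ht : measurableType dH) (Zt : measurableType dZ) (Rep : measurableType dR)
  (p : probability Ht R) (q : probability Zt R)
  (KY : bool -> R.-pker (Ht * Zt)%type ~> R)
  (e a : Ht -> R)
  (me : measurable_fun setT e)
  (e01 : forall h, (0 < e h < 1)%R)
  (ma : measurable_fun setT a)
  (a0 : forall h, (0 <= a h)%R)
  (ia : p.-integrable setT (EFin \o a))
  (apos : 0 < \int[p]_h (a h)%:E)
  (kint : forall w h z, (KY w (h, z)).-integrable setT EFin)
  (Phi : Ht -> Rep) (f : Rep -> Zt -> bool -> R)
  (mPhi : measurable_fun setT Phi)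
  (mf : forall w, measurable_fun setT (fun rz : Rep * Zt => f rz.1 rz.2 w)).

Let Sq w (hz : Ht * Zt) := \int[KY w hz]_y ((y - f (Phi hz.1) hz.2 w) ^+ 2)%:E.

Lemma X_le h z : ((tau KY h z - tauhat f Phi h z) ^+ 2)%:E <=
  2%:E * Sq true (h, z) + 2%:E * Sq false (h, z).
Proof.
set m1 := fine (\int[KY true (h, z)]_y y%:E).
set m0 := fine (\int[KY false (h, z)]_y y%:E).
set f1 := f (Phi h) z true.
set f0 := f (Phi h) z false.
have J1 := jensen_sq _ (KY true (h, z)) f1 (@prob_kernel _ _ _ _ _ (KY true) (h, z)) (kint true h z).
have J0 := jensen_sq _ (KY false (h, z)) f0 (@prob_kernel _ _ _ _ _ (KY false) (h, z)) (kint false h z).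
have -> : (tau KY h z - tauhat f Phi h z = (m1 - f1) - (m0 - f0))%R.
  by rewrite /tau /tauhat -/m1 -/m0 -/f1 -/f0; ring.
apply: (@le_trans _ _ ((2 * (m1 - f1) ^+ 2 + 2 * (m0 - f0) ^+ 2)%R%:E)).
  rewrite lee_fin -subr_ge0.
  rewrite (_ : (_ - _ = ((m1 - f1) + (m0 - f0)) ^+ 2)%R) ?sqr_ge0 //; ring.
rewrite EFinD !EFinM; apply: leeD; apply: lee_wpmul2l => //.
Qed.


Let c (h : Ht) := (a h / NN _ _ _ p a)%R.

Lemma c_ge0 h : (0 <= c h)%R.
Proof. by rewrite /c divr_ge0// ltW// (NN_gt0 _ _ _ _ _ ia apos). Qed.

Lemma mc : measurable_fun [set: Ht * Zt] (fun hz : Ht * Zt => (c hz.1)%:E).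
Proof.
apply/measurable_EFinP; rewrite /c.
apply: measurable_funM; last exact: measurable_cst.
exact: measurableT_comp ma measurable_fst.
Qed.

Let Fg (hz : Ht * Zt) := ((tau KY hz.1 hz.2 - tauhat f Phi hz.1 hz.2) ^+ 2)%:E * (c hz.1)%:E.
Let G w (hz : Ht * Zt) := Sq w hz * (c hz.1)%:E.

Lemma mFg : measurable_fun setT Fg.
Proof. exact: emeasurable_funM (mX _ _ _ _ _ _ _ KY Phi f mPhi mf) mc. Qed.

Lemma Fg0 hz : 0 <= Fg hz.
Proof. by rewrite /Fg mule_ge0// lee_fin ?sqr_ge0 ?c_ge0. Qed.

Lemma Sq0 w hz : 0 <= Sq w hz.
Proof. by apply: integral_ge0 => y _; rewrite lee_fin sqr_ge0. Qed.

Lemma mG w : measurable_fun setT (G w).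
Proof. exact: emeasurable_funM (mSq _ _ _ _ _ _ _ KY Phi f mPhi mf w) mc. Qed.

Lemma G0 w hz : 0 <= G w hz.
Proof. by rewrite /G mule_ge0// ?Sq0// lee_fin c_ge0. Qed.

Lemma pehe_gE : pehe_g p a q KY f Phi = \int[p \x q]_hz Fg hz.
Proof. by rewrite (fubini_tonelli2 Fg mFg Fg0). Qed.

Lemma intGE w : \int[p \x q]_hz G w hz = wrisk p e a q KY f Phi w.
Proof.
rewrite (fubini_tonelli1 (G w) (mG w) (G0 w)) (wriskE _ _ _ _ _ _ _ p q KY e a me e01 ia apos f Phi w).
apply: eq_integral => h _; rewrite /fubini_F /G /=.
rewrite ge0_integralZr//.
- exact: (measurable_fun_pair2 h (mSq _ _ _ _ _ _ _ KY Phi f mPhi mf w)).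
- by move=> z _; exact: Sq0.
- by rewrite lee_fin c_ge0.
Qed.

Lemma part1 : pehe_g p a q KY f Phi <=
  2%:E * (wrisk p e a q KY f Phi true + wrisk p e a q KY f Phi false).
Proof.
rewrite pehe_gE -!intGE.
have H : \int[p \x q]_hz Fg hz <= \int[p \x q]_hz (2%:E * G true hz + 2%:E * G false hz).
  apply: (ge0_le_integral (p \x q) measurableT).
  - by move=> hz _; exact: Fg0.
  - exact: mFg.
  - apply: emeasurable_funD; apply: measurable_funeM; exact: mG.
  - move=> [h z] _; rewrite /Fg /G /= !muleA -muleDl//; last first.
      by apply: ge0_adde_def; rewrite inE mule_ge0// Sq0.
    by apply: lee_wpmul2r; [rewrite lee_fin c_ge0|exact: X_le].
apply: (le_trans H); rewrite le_eqVlt; apply/orP; left; apply/eqP.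
have i1 : 0 <= \int[p \x q]_hz G true hz by apply: integral_ge0 => hz _; exact: G0.
have i0 : 0 <= \int[p \x q]_hz G false hz by apply: integral_ge0 => hz _; exact: G0.
rewrite (ge0_muleDr _ i1 i0).
rewrite (ge0_integralD (p \x q) measurableT); last 4 first.
- by move=> hz _; rewrite mule_ge0// G0.
- apply: measurable_funeM; exact: mG.
- by move=> hz _; rewrite mule_ge0// G0.
- apply: measurable_funeM; exact: mG.
rewrite (ge0_integralZl (p \x q) measurableT (mG true)); last 2 first.
- by move=> hz _; exact: G0.
- by [].
rewrite (ge0_integralZl (p \x q) measurableT (mG false)); last 2 first.
- by move=> hz _; exact: G0.
- by [].
by [].
Qed.

Let Xf (hz : Ht * Zt) := ((tau KY hz.1 hz.2 - tauhat f Phi hz.1 hz.2) ^+ 2)%:E.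

Lemma part2_bounds (A B : R) : (0 <= A)%R -> (0 <= B)%R ->
  (forall h, A * c h <= 1)%R -> (forall h, 1 <= B * c h)%R ->
  A%:E * pehe_g p a q KY f Phi <= pehe p q KY f Phi /\ pehe p q KY f Phi <= B%:E * pehe_g p a q KY f Phi.
Proof.
move=> A0 B0 cA cB.
have mXf : measurable_fun setT Xf by exact: (mX _ _ _ _ _ _ _ KY Phi f mPhi mf).
have Xf0 hz : 0 <= Xf hz by rewrite lee_fin sqr_ge0.
have -> : pehe p q KY f Phi = \int[p \x q]_hz Xf hz by rewrite (fubini_tonelli2 Xf mXf Xf0).
rewrite pehe_gE; split.
  rewrite -(ge0_integralZl (p \x q) measurableT mFg); last 2 first.
  - by move=> hz _; exact: Fg0.
  - by rewrite lee_fin.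
  apply: (ge0_le_integral (p \x q) measurableT).
  - by move=> hz _; apply: mule_ge0; [rewrite lee_fin|exact: Fg0].
  - exact: measurable_funeM mFg.
  - exact: mXf.
  - move=> [h z] _; rewrite /Fg /Xf /= -!EFinM lee_fin mulrCA.
    by apply: ler_piMr; [exact: sqr_ge0|exact: cA].
rewrite -(ge0_integralZl (p \x q) measurableT mFg); last 2 first.
- by move=> hz _; exact: Fg0.
- by rewrite lee_fin.
apply: (ge0_le_integral (p \x q) measurableT).
- by move=> hz _; exact: Xf0.
- exact: mXf.
- exact: measurable_funeM mFg.
- move=> [h z] _; rewrite /Fg /Xf /= -!EFinM lee_fin mulrCA.
  by apply: ler_peMr; [exact: sqr_ge0|exact: cB].
Qed.

End part1.



Theorem theorem3 (R : realType) (dH dZ dR : measure_display)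
  (Ht : measurableType dH) (Zt : measurableType dZ) (Rep : measurableType dR)
  (p : probability Ht R) (q : probability Zt R)
  (KY : bool -> R.-pker (Ht * Zt)%type ~> R)
  (e a : Ht -> R) (G : set (Rep -> R)) :
  measurable_fun setT e ->
  (forall h, (0 < e h < 1)%R) ->
  measurable_fun setT a ->
  (forall h, (0 <= a h)%R) ->
  p.-integrable setT (EFin \o a) ->
  0 < \int[p]_h (a h)%:E ->
  (forall w h z, (KY w (h, z)).-integrable setT EFin) ->
  (exists C : R, forall (Phi : Ht -> Rep) (Psi : Rep -> Ht)
      (f : Rep -> Zt -> bool -> R) (BPhi : R),
      measurable_fun setT Phi ->
      (forall w, measurable_fun setT (fun rz : Rep * Zt => f rz.1 rz.2 w)) ->
      cancel Phi Psi -> cancel Psi Phi ->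
      (0 < BPhi)%R ->
      (forall h w, ell q KY f Phi h w \is a fin_num) ->
      (forall w, G (fun r => fine (ell q KY f Phi (Psi r) w) / BPhi)%R) ->
      pehe_g p a q KY f Phi <=
        2%:E * (wrisk p e a q KY f Phi true + wrisk p e a q KY f Phi false)
        + BPhi%:E * IPM G (gPhiE p e a Phi true) (gPhiE p e a Phi false)
        + C%:E)
  /\
  (forall delta : R, (0 < delta < 1 / 2)%R ->
     (forall h, (delta < e h < 1 - delta)%R) ->
     (exists kappa : R -> R, continuous kappa /\
        (forall x, (0 < x < 1)%R -> (0 < kappa x)%R) /\ a = kappa \o e) ->
     exists A B : R, (0 < A)%R /\ (A <= B)%R /\
       forall (Phi : Ht -> Rep) (f : Rep -> Zt -> bool -> R),
         measurable_fun setT Phi ->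
         (forall w, measurable_fun setT (fun rz : Rep * Zt => f rz.1 rz.2 w)) ->
         A%:E * pehe_g p a q KY f Phi <= pehe p q KY f Phi /\
         pehe p q KY f Phi <= B%:E * pehe_g p a q KY f Phi).
Proof.
move=> me e01 ma a0 ia apos kint; split.
  exists 0%R => Phi Psi f BPhi mPhi mf PsiK PhiK B0 fin Gh.
  apply: le_trans (part1 _ _ _ _ _ _ _ p q KY e a me e01 ma a0 ia apos kint Phi f mPhi mf) _.
  rewrite adde0; apply: leeDl; apply: mule_ge0; first by rewrite lee_fin ltW.
  set u := (fun r => fine (ell q KY f Phi (Psi r) true) / BPhi)%R.
  rewrite /IPM; apply: le_trans (abse_ge0 (gPhiE p e a Phi true u - gPhiE p e a Phi false u)) _.
  by apply: ereal_sup_ubound; exists u => //; exact: Gh.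
move=> delta /andP[d0 d12] he [kappa [ck [kp ha]]].
have dd : (delta <= 1 - delta)%R by lra.
have cw : {within `[delta, (1 - delta)%R], continuous kappa} by apply: continuous_subspaceT.
have [cM cMi hM] := EVT_max dd cw.
have [cm cmi hm] := EVT_min dd cw.
set M := kappa cM; set m := kappa cm.
have in01 t : t \in `[delta, (1 - delta)%R]%R -> (0 < t < 1)%R.
  by rewrite in_itv /= => /andP[h1 h2]; apply/andP; split; lra.
have m0 : (0 < m)%R := kp _ (in01 _ cmi).
have mM : (m <= M)%R := hM _ cmi.
have M0 : (0 < M)%R := lt_le_trans m0 mM.
have ei h : e h \in `[delta, (1 - delta)%R]%R.
  by rewrite in_itv /=; have := he h; case/andP => h1 h2; rewrite !ltW.
have ah h : a h = kappa (e h) by rewrite ha.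
have am h : (m <= a h)%R by rewrite ah; exact: hm.
have aM h : (a h <= M)%R by rewrite ah; exact: hM.
have Nm : (m <= NN _ _ _ p a)%R.
  rewrite -lee_fin -(intaE _ _ _ p a ia) -(int_cstp _ _ _ p m).
  apply: (ge0_le_integral p measurableT).
  - by move=> h _; rewrite /= lee_fin ltW.
  - exact: measurable_cst.
  - by apply/measurable_EFinP.
  - by move=> h _; rewrite /= lee_fin.
have NM : (NN _ _ _ p a <= M)%R.
  rewrite -lee_fin -(intaE _ _ _ p a ia) -(int_cstp _ _ _ p M).
  apply: (ge0_le_integral p measurableT).
  - by move=> h _; rewrite /= lee_fin.
  - by apply/measurable_EFinP.
  - exact: measurable_cst.
  - by move=> h _; rewrite /= lee_fin.
have N0 : (0 < NN _ _ _ p a)%R := lt_le_trans m0 Nm.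
exists (m / M)%R, (M / m)%R; split; first exact: divr_gt0.
split.
  apply: (@le_trans _ _ 1%R).
    by rewrite ler_pdivrMr // mul1r.
  by rewrite ler_pdivlMr // mul1r.
move=> Phi f mPhi mf.
apply: (part2_bounds _ _ _ _ _ _ _ p q KY a ma a0 ia apos Phi f mPhi mf).
- by rewrite divr_ge0// ltW.
- by rewrite divr_ge0// ltW.
- move=> h; rewrite mulf_div ler_pdivrMr ?mulr_gt0// mul1r mulrC.
  by apply: ler_pM => //; rewrite ltW.
- move=> h; rewrite mulf_div ler_pdivlMr ?mulr_gt0// mul1r mulrC.
  by apply: ler_pM => //; rewrite ltW.
Qed.
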